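(* Let $N$ be an even positive integer and $\hbar=1/(2\pi N)$. Then for every $m\in\{0,\dots,N-1\}$, $XF\Phi_m^{(0,0)}=F\Phi_m^{(0,0)}$ and $YF\Phi_m^{(0,0)}=F\Phi_m^{(0,0)}$.
   Context: On $L^2(\mathbb{R})$ with $[\widehat{x},\widehat{p}]=i\hbar$, $|x\rangle_x$ are position eigen-distributions. $\Phi_m^{(0,0)}=N^{-1/2}\sum_{k\in\mathbb{Z}}|m/N+k\rangle_x$ (periodic $\delta$-comb). $X^s=e^{is\widehat{x}/\hbar}$, $Y^s=e^{is\widehat{p}/\hbar}$ for real $s$ (so $X=e^{2\pi iN\widehat{x}}$, $Y=e^{2\pi iN\widehat{p}}$). Projections $L,R,E_x,O_x$ are multiplication in position representation by the indicators of $[0,1/2)+\mathbb{Z}$, $[1/2,1)+\mathbb{Z}$, $[0,1)+2\mathbb{Z}$, $[1,2)+2\mathbb{Z}$; $B,T,E_p,O_p$ are the analogous projections in momentum representation onto $[0,1/2)+\mathbb{Z}$, $[1/2,1)+\mathbb{Z}$, $[0,1)+2\mathbb{Z}$, $[1,2)+2\mathbb{Z}$; these act on $\delta$-comb distributions by pointwise multiplication by the indicator at the support points. $S=\exp\!\left(-\frac{i\log2}{2\hbar}(\widehat{x}\widehat{p}+\widehat{p}\widehat{x})\right)$, acting on distributions by $S|x\rangle_x=\sqrt2\,|2x\rangle_x$ (so $S^\dagger\widehat{x}S=2\widehat{x}$). The propagator is $F=S(L+X^{-1}R)(E_p+Y^{-1/2}O_p)$, which the paper also writes as $(E_x+X^{-1/2}O_x)(B+Y^{-1}T)S$.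 *)

(* Defs.v *)
From Stdlib Require Import Reals ZArith ClassicalEpsilon.
From Coquelicot Require Import Complex.
Open Scope R_scope.

(** A (formal) delta-comb distribution  psi = sum_x c(x) |x>  (position basis),
    represented by its coefficient function c : R -> C (zero off the support).
    The same type is used for momentum-basis combs  sum_p d(p) |p>_p. *)
Definition comb := R -> C.

Definition ind (P : Prop) : C :=
  if excluded_middle_informative P then RtoC 1 else RtoC 0.

Definition cexpi (t : R) : C := (cos t, sin t).

Fixpoint csum (K : nat) (f : nat -> C) : C :=
  match K with O => RtoC 0 | S k => Cplus (csum k f) (f k) end.

Definition on_lattice (b x : R) : Prop := exists k : Z, x = IZR k * b.

Definition IsComb (a : R) (K : nat) (c : comb) : Prop :=
  0 < a /\ (0 < K)%nat /\
  (forall x, c x <> RtoC 0 -> on_lattice a x) /\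
  (forall x, c (x + INR K * a) = c x).

Definition pres (c : comb) : R * nat :=
  epsilon (inhabits (1, 1%nat)) (fun q => IsComb (fst q) (snd q) c).

(** Fourier transform of a periodic lattice comb (Poisson summation):
    sgn = -1 : position -> momentum,  <p|psi> = (2 pi h)^(-1/2) int e^{-ipx/h} psi(x) dx
    sgn = +1 : momentum -> position (inverse transform). *)
Definition dft (sgn h : R) (c : comb) : comb :=
  let a := fst (pres c) in
  let K := snd (pres c) in
  let T := INR K * a in
  fun p => Cmult (Cmult (ind (on_lattice (2 * PI * h / T) p))
                        (RtoC (sqrt (2 * PI * h) / T)))
                 (csum K (fun n => Cmult (c (INR n * a))
                                         (cexpi (sgn * p * (INR n * a) / h)))).

Definition toMom (h : R) (c : comb) : comb := dft (-1) h c.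
Definition toPos (h : R) (d : comb) : comb := dft 1 h d.

Definition cadd (c1 c2 : comb) : comb := fun x => Cplus (c1 x) (c2 x).

(** X^s = exp(i s xhat / h) : multiplication by e^{isx/h} *)
Definition Xop (h s : R) (c : comb) : comb := fun x => Cmult (cexpi (s * x / h)) (c x).
(** Y^s = exp(i s phat / h) : Y^s |x> = |x - s> *)
Definition Yop (s : R) (c : comb) : comb := fun x => c (x + s).
(** S |x> = sqrt 2 |2x> *)
Definition Sop (c : comb) : comb := fun y => Cmult (RtoC (sqrt 2)) (c (y / 2)).

Definition mulind (P : R -> Prop) (c : comb) : comb := fun x => Cmult (ind (P x)) (c x).
Definition momproj (h : R) (P : R -> Prop) (c : comb) : comb :=
  toPos h (fun p => Cmult (ind (P p)) (toMom h c p)).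

Definition Lset (x : R) : Prop := exists k : Z, IZR k <= x < IZR k + / 2.
Definition Rset (x : R) : Prop := exists k : Z, IZR k + / 2 <= x < IZR k + 1.
Definition Eset (x : R) : Prop := exists k : Z, 2 * IZR k <= x < 2 * IZR k + 1.
Definition Oset (x : R) : Prop := exists k : Z, 2 * IZR k + 1 <= x < 2 * IZR k + 2.

Definition Lop := mulind Lset.
Definition Rop := mulind Rset.
Definition Ep (h : R) := momproj h Eset.
Definition Op (h : R) := momproj h Oset.

Definition Fop (h : R) (c : comb) : comb :=
  let v := cadd (Ep h c) (Yop (- / 2) (Op h c)) in
  Sop (cadd (Lop v) (Xop h (-1) (Rop v))).

Definition hbar (N : nat) : R := / (2 * PI * INR N).

Definition Phi (N m : nat) : comb :=
  fun x => Cmult (RtoC (/ sqrt (INR N)))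
                 (ind (exists k : Z, x = INR m / INR N + IZR k)).

(* Main.v *)
Require Import Defs.
From Stdlib Require Import Reals ZArith Lra Lia ClassicalEpsilon FunctionalExtensionality.
From Coquelicot Require Import Complex.
Open Scope R_scope.

Lemma C_ext (u v : C) : fst u = fst v -> snd u = snd v -> u = v.
Proof. destruct u, v; simpl; intros; subst; reflexivity. Qed.

Lemma cexpi_plus a b : cexpi (a + b) = Cmult (cexpi a) (cexpi b).
Proof. unfold cexpi; apply C_ext; simpl; rewrite ?cos_plus, ?sin_plus; ring. Qed.

Lemma cexpi_0 : cexpi 0 = RtoC 1.
Proof. unfold cexpi; apply C_ext; simpl; rewrite ?cos_0, ?sin_0; ring. Qed.

Lemma cos_periodZ x (k : Z) : cos (x + 2 * IZR k * PI) = cos x.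
Proof.
  destruct (Z_le_gt_dec 0 k).
  - rewrite <- (Z2Nat.id k) by lia. rewrite <- INR_IZR_INZ. apply cos_period.
  - pose proof (cos_period (x + 2 * IZR k * PI) (Z.to_nat (- k))) as H.
    rewrite INR_IZR_INZ, Z2Nat.id in H by lia. rewrite opp_IZR in H.
    replace (x + 2 * IZR k * PI + 2 * - IZR k * PI) with x in H by ring. auto.
Qed.

Lemma sin_periodZ x (k : Z) : sin (x + 2 * IZR k * PI) = sin x.
Proof.
  destruct (Z_le_gt_dec 0 k).
  - rewrite <- (Z2Nat.id k) by lia. rewrite <- INR_IZR_INZ. apply sin_period.
  - pose proof (sin_period (x + 2 * IZR k * PI) (Z.to_nat (- k))) as H.
    rewrite INR_IZR_INZ, Z2Nat.id in H by lia. rewrite opp_IZR in H.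
    replace (x + 2 * IZR k * PI + 2 * - IZR k * PI) with x in H by ring. auto.
Qed.

Lemma cexpi_2kpi (k : Z) : cexpi (2 * IZR k * PI) = RtoC 1.
Proof.
  unfold cexpi. pose proof (cos_periodZ 0 k); pose proof (sin_periodZ 0 k).
  rewrite Rplus_0_l in *. rewrite H, H0, cos_0, sin_0. reflexivity.
Qed.

Lemma cexpi_eq1 t : cexpi t = RtoC 1 -> exists k : Z, t = 2 * IZR k * PI.
Proof.
  unfold cexpi; intros H. injection H; intros Hs Hc.
  destruct (sin_eq_0_0 t Hs) as [k Hk].
  destruct (Z.Even_or_Odd k) as [[j Hj]|[j Hj]].
  - exists j. subst. rewrite mult_IZR. ring.
  - exfalso. subst. rewrite plus_IZR, mult_IZR in Hc.
    replace ((2 * IZR j + 1) * PI) with (PI + 2 * IZR j * PI) in Hc by ring.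
    rewrite cos_periodZ, cos_PI in Hc. lra.
Qed.

Lemma ind_true (A : Prop) : A -> Defs.ind A = RtoC 1.
Proof. intros H; unfold Defs.ind; destruct (excluded_middle_informative A); tauto. Qed.
Lemma ind_false (A : Prop) : ~ A -> Defs.ind A = RtoC 0.
Proof. intros H; unfold Defs.ind; destruct (excluded_middle_informative A); tauto. Qed.
Lemma ind_iff (A B : Prop) : (A <-> B) -> Defs.ind A = Defs.ind B.
Proof. intros H; unfold Defs.ind; destruct (excluded_middle_informative A), (excluded_middle_informative B); tauto. Qed.

Lemma csum_ext K f g : (forall n, (n < K)%nat -> f n = g n) -> csum K f = csum K g.
Proof. induction K; simpl; intros H; auto. rewrite IHK. rewrite (H K). auto. lia. intros; apply H; lia. Qed.

Lemma csum_add a b f : csum (a + b) f = Cplus (csum a f) (csum b (fun n => f (a + n)%nat)).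
Proof. induction b; simpl. rewrite Nat.add_0_r. apply C_ext; simpl; ring.
  rewrite Nat.add_succ_r. simpl. rewrite IHb. apply C_ext; simpl; ring. Qed.

Lemma csum_scal K f c : csum K (fun n => Cmult (f n) c) = Cmult (csum K f) c.
Proof. induction K; cbn [csum]. apply C_ext; simpl; ring. rewrite IHK. ring. Qed.

Lemma csum_zero K f : (forall n, (n < K)%nat -> f n = RtoC 0) -> csum K f = RtoC 0.
Proof. induction K; simpl; intros H; auto. rewrite IHK. rewrite (H K). apply C_ext; simpl; ring. lia. intros; apply H; lia. Qed.

Lemma csum_first q f : (0 < q)%nat -> (forall j, (0 < j < q)%nat -> f j = RtoC 0) -> csum q f = f O.
Proof.
  intros Hq H. destruct q; [lia|]. replace (S q) with (1 + q)%nat by lia.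
  rewrite csum_add, (csum_zero q). cbn [csum]. ring.
  intros; apply H; lia.
Qed.

Definition dftF (s h a : R) (K : nat) (c : comb) : comb :=
  fun p => Cmult (Cmult (Defs.ind (on_lattice (2 * PI * h / (INR K * a)) p))
                        (RtoC (sqrt (2 * PI * h) / (INR K * a))))
                 (csum K (fun n => Cmult (c (INR n * a))
                                         (cexpi (s * p * (INR n * a) / h)))).

Lemma dft_unfold s h c : dft s h c = dftF s h (fst (pres c)) (snd (pres c)) c.
Proof. reflexivity. Qed.

Lemma comb_period a K c : IsComb a K c -> forall r x, c (x + INR r * (INR K * a)) = c x.
Proof.
  intros [_ [_ [_ Hp]]] r. induction r; intros x.
  - simpl. f_equal. ring.
  - rewrite S_INR. replace (x + (INR r + 1) * (INR K * a)) with ((x + INR r * (INR K * a)) + INR K * a) by ring.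
    rewrite Hp. auto.
Qed.

Lemma csum_const r : csum r (fun _ => RtoC 1) = RtoC (INR r).
Proof. induction r; cbn [csum]. reflexivity. rewrite IHr, S_INR, RtoC_plus. reflexivity. Qed.

Lemma geom th r : Cmult (csum r (fun j => cexpi (th * INR j))) (Cminus (cexpi th) (RtoC 1))
   = Cminus (cexpi (th * INR r)) (RtoC 1).
Proof.
  induction r; cbn [csum].
  - simpl INR. rewrite Rmult_0_r, cexpi_0. ring.
  - rewrite Cmult_plus_distr_r, IHr. rewrite S_INR.
    replace (th * (INR r + 1)) with (th * INR r + th) by ring. rewrite cexpi_plus. ring.
Qed.

Lemma C_mul_eq0 (u w : C) : Cmult u w = RtoC 0 -> w <> RtoC 0 -> u = RtoC 0.
Proof. intros H Hw. replace u with (Cmult (Cmult u w) (Cinv w)) by (field; auto).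
  rewrite H. ring. Qed.

Lemma dftF_period s h a K c r : (s = 1 \/ s = -1) -> h <> 0 -> IsComb a K c -> (0 < r)%nat ->
  dftF s h a (K * r) c = dftF s h a K c.
Proof.
  intros Hs Hh Hc Hr. pose proof Hc as [Ha [HK [Hsup Hper]]].
  apply functional_extensionality; intros p. unfold dftF.
  set (T := INR K * a).
  assert (HT : 0 < T) by (unfold T; apply Rmult_lt_0_compat; auto; apply lt_0_INR; auto).
  assert (Hrp : 0 < INR r) by (apply lt_0_INR; auto).
  set (f := fun n => Cmult (c (INR n * a)) (cexpi (s * p * (INR n * a) / h))).
  set (th := s * p * T / h).
  assert (Hsum : forall r', csum (K * r') f = Cmult (csum r' (fun j => cexpi (th * INR j))) (csum K f)).
  { induction r'; cbn [csum].
    - rewrite Nat.mul_0_r. cbn [csum]. ring.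
    - replace (K * S r')%nat with (K * r' + K)%nat by lia. rewrite csum_add, IHr'.
      rewrite (csum_ext K (fun n => f (K * r' + n)%nat) (fun n => Cmult (f n) (cexpi (th * INR r')))).
      + rewrite csum_scal. ring.
      + intros n _. unfold f. rewrite plus_INR, mult_INR.
        replace ((INR K * INR r' + INR n) * a) with (INR n * a + INR r' * (INR K * a)) by ring.
        rewrite (comb_period a K c Hc).
        replace (s * p * (INR n * a + INR r' * (INR K * a)) / h) with
          (s * p * (INR n * a) / h + th * INR r') by (unfold th, T; field; auto).
        rewrite cexpi_plus. ring. }
  change (csum (K * r) (fun n => Cmult (c (INR n * a)) (cexpi (s * p * (INR n * a) / h)))) with (csum (K * r) f).
  change (csum K (fun n => Cmult (c (INR n * a)) (cexpi (s * p * (INR n * a) / h)))) with (csum K f).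
  rewrite Hsum.
  replace (INR (K * r) * a) with (INR r * T) by (unfold T; rewrite mult_INR; ring).
  destruct (classic (on_lattice (2 * PI * h / (INR r * T)) p)) as [[z Hz]|Hn].
  - destruct (classic (on_lattice (2 * PI * h / T) p)) as [[k Hk]|Hco].
    + rewrite (csum_ext r _ (fun _ => RtoC 1)).
      * rewrite csum_const, !ind_true; [| exists k; auto | exists z; auto].
        replace (RtoC (sqrt (2 * PI * h) / T)) with (Cmult (RtoC (sqrt (2 * PI * h) / (INR r * T))) (RtoC (INR r))).
        ring. rewrite <- RtoC_mult. f_equal. field. lra.
      * intros j _. replace (th * INR j) with (2 * IZR (if Req_dec_T s 1 then k * Z.of_nat j else - (k * Z.of_nat j))%Z * PI).
        apply cexpi_2kpi. unfold th. rewrite Hk.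
        destruct (Req_dec_T s 1); [|destruct Hs; [congruence|]]; subst s;
          rewrite ?opp_IZR, mult_IZR, <- INR_IZR_INZ; field; lra.
    + rewrite (ind_false (on_lattice (2 * PI * h / T) p)) by auto.
      assert (HG : csum r (fun j => cexpi (th * INR j)) = RtoC 0).
      { apply (C_mul_eq0 _ (Cminus (cexpi th) (RtoC 1))).
        - rewrite geom. replace (th * INR r) with (2 * IZR (if Req_dec_T s 1 then z else - z)%Z * PI).
          rewrite cexpi_2kpi. ring.
          unfold th. rewrite Hz.
          destruct (Req_dec_T s 1); [|destruct Hs; [congruence|]]; subst s;
            rewrite ?opp_IZR; field; lra.
        - intros H0. apply Hco. assert (H1 : cexpi th = RtoC 1).
          { replace (cexpi th) with (Cplus (Cminus (cexpi th) (RtoC 1)) (RtoC 1)) by ring.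
            rewrite H0. ring. }
          destruct (cexpi_eq1 th H1) as [k Hk].
          exists (if Req_dec_T s 1 then k else - k)%Z. unfold th in Hk.
          destruct (Req_dec_T s 1); [|destruct Hs; [congruence|]]; subst s; rewrite ?opp_IZR.
          * replace p with (1 * p * T / h * (h / T)) by (field; split; lra).
            rewrite Hk. field. lra.
          * replace p with (- (-1 * p * T / h * (h / T))) by (field; split; lra).
            rewrite Hk. field. lra. }
      rewrite HG. ring.
  - rewrite (ind_false (on_lattice (2 * PI * h / (INR r * T)) p)) by auto.
    rewrite (ind_false (on_lattice (2 * PI * h / T) p)).
    ring. intros [k Hk]. apply Hn. exists (k * Z.of_nat r)%Z. rewrite Hk, mult_IZR, <- INR_IZR_INZ. field. lra.
Qed.

Lemma dftF_refine s h g q M c : (0 < q)%nat -> 0 < g ->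
  (forall x, c x <> RtoC 0 -> on_lattice (INR q * g) x) ->
  dftF s h (INR q * g) M c = dftF s h g (M * q) c.
Proof.
  intros Hq Hg Hsup. apply functional_extensionality; intros p. unfold dftF.
  replace (INR (M * q) * g) with (INR M * (INR q * g)) by (rewrite mult_INR; ring).
  f_equal. induction M.
  - reflexivity.
  - replace (S M * q)%nat with (M * q + q)%nat by lia. rewrite csum_add, <- IHM. cbn [csum]. f_equal.
    rewrite csum_first; auto.
    + rewrite Nat.add_0_r, mult_INR. rewrite (Rmult_assoc (INR M) (INR q) g). reflexivity.
    + intros j Hj. destruct (classic (c (INR (M * q + j) * g) = RtoC 0)) as [H0|H0].
      * rewrite H0. ring.
      * exfalso. destruct (Hsup _ H0) as [z Hz].
        assert (Hz' : INR (M * q + j) = IZR z * INR q).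
        { apply (Rmult_eq_reg_r g). rewrite Hz. ring. lra. }
        rewrite !INR_IZR_INZ, <- mult_IZR in Hz'. apply eq_IZR in Hz'. rewrite Nat2Z.inj_add, Nat2Z.inj_mul in Hz'.
        assert (Hd : ((z - Z.of_nat M) * Z.of_nat q = Z.of_nat j)%Z) by lia.
        destruct (Z_le_gt_dec (z - Z.of_nat M) 0); nia.
Qed.

Lemma dftF_zero s h a K c : (forall x, c x = RtoC 0) -> forall p, dftF s h a K c p = RtoC 0.
Proof. intros H p. unfold dftF. rewrite csum_zero. ring. intros n _. rewrite H. ring. Qed.

Lemma pres_indep s h a K b L c : (s = 1 \/ s = -1) -> h <> 0 -> IsComb a K c -> IsComb b L c ->
  dftF s h a K c = dftF s h b L c.
Proof.
  intros Hs Hh Ha Hb.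
  destruct (classic (forall x, c x = RtoC 0)) as [Hz|Hnz].
  { apply functional_extensionality; intros p. rewrite !dftF_zero; auto. }
  apply Classical_Pred_Type.not_all_ex_not in Hnz as [x0 Hx0].
  pose proof Ha as [Ha0 [HK [HsA HpA]]]. pose proof Hb as [Hb0 [HL [HsB HpB]]].
  destruct (HsB x0 Hx0) as [i Hi].
  assert (Hx1 : c (x0 + INR K * a) <> RtoC 0) by (rewrite HpA; auto).
  destruct (HsB _ Hx1) as [j Hj].
  assert (HKa : INR K * a = IZR (j - i) * b) by (rewrite minus_IZR; lra).
  assert (Hji : (0 < j - i)%Z).
  { apply lt_IZR. assert (0 < INR K * a) by (apply Rmult_lt_0_compat; auto; apply lt_0_INR; auto).
    rewrite HKa in H. simpl. apply (Rmult_lt_reg_r b); lra. }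
  set (z := Z.to_nat (j - i)).
  assert (Hzr : INR z = IZR (j - i)) by (unfold z; rewrite INR_IZR_INZ, Z2Nat.id by lia; reflexivity).
  assert (HKp : 0 < INR K) by (apply lt_0_INR; auto).
  set (g := b / INR K).
  assert (Hg : 0 < g) by (unfold g; apply Rdiv_lt_0_compat; auto).
  assert (Hag : a = INR z * g) by (unfold g; rewrite Hzr; apply (Rmult_eq_reg_l (INR K)); [rewrite HKa; field; lra | lra]).
  assert (Hbg : b = INR K * g) by (unfold g; field; lra).
  assert (Hz0 : (0 < z)%nat) by (unfold z; lia).
  rewrite <- (dftF_period s h a K c L), <- (dftF_period s h b L c z); auto.
  rewrite Hag at 1. rewrite dftF_refine; auto. 2: rewrite <- Hag; auto.
  rewrite Hbg at 1. rewrite dftF_refine; auto. 2: rewrite <- Hbg; auto.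
  f_equal. lia.
Qed.

Lemma dft_eq s h a K c : (s = 1 \/ s = -1) -> h <> 0 -> IsComb a K c -> dft s h c = dftF s h a K c.
Proof.
  intros Hs Hh Hc. rewrite dft_unfold. apply pres_indep; auto.
  unfold pres. apply (epsilon_spec (inhabits (1, 1%nat)) (fun q => IsComb (fst q) (snd q) c)).
  exists (a, K). exact Hc.
Qed.

Lemma lat_shift b x k : on_lattice b (x + IZR k * b) <-> on_lattice b x.
Proof.
  split; intros [j Hj].
  - exists (j - k)%Z. rewrite minus_IZR. lra.
  - exists (j + k)%Z. rewrite plus_IZR. rewrite Hj. ring.
Qed.

Lemma dftF_shift s h a K c p : (s = 1 \/ s = -1) -> h <> 0 -> 0 < a -> (0 < K)%nat ->
  dftF s h a K c (p + 2 * PI * h / a) = dftF s h a K c p.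
Proof.
  intros Hs Hh Ha HK. unfold dftF.
  assert (HKp : 0 < INR K) by (apply lt_0_INR; auto).
  f_equal. f_equal. apply ind_iff.
  replace (2 * PI * h / a) with (IZR (Z.of_nat K) * (2 * PI * h / (INR K * a))).
  apply lat_shift. rewrite <- INR_IZR_INZ. field. lra.
  apply csum_ext. intros n _. f_equal.
  replace (s * (p + 2 * PI * h / a) * (INR n * a) / h) with
    (s * p * (INR n * a) / h + 2 * IZR (if Req_dec_T s 1 then Z.of_nat n else - Z.of_nat n)%Z * PI).
  rewrite cexpi_plus, cexpi_2kpi. ring.
  destruct (Req_dec_T s 1); [|destruct Hs; [congruence|]]; subst s;
    rewrite ?opp_IZR, <- INR_IZR_INZ; field; lra.
Qed.

Lemma E_lo y : 0 <= y < 1 -> Defs.Eset y /\ ~ Defs.Oset y.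
Proof.
  intros Hy. split. exists 0%Z. simpl. lra.
  intros [k Hk]. assert (k < 0)%Z by (apply lt_IZR; simpl; lra).
  assert (-1 < k)%Z by (apply lt_IZR; simpl; lra). lia.
Qed.

Lemma O_hi y : 1 <= y < 2 -> Defs.Oset y /\ ~ Defs.Eset y.
Proof.
  intros Hy. split. exists 0%Z. simpl. lra.
  intros [k Hk]. assert (k < 1)%Z by (apply lt_IZR; simpl; lra).
  assert (0 < k)%Z by (apply lt_IZR; simpl; lra). lia.
Qed.

Lemma L_shift x : Defs.Lset (x + / 2) <-> Defs.Rset x.
Proof. split; intros [k Hk].
  - exists (k - 1)%Z. rewrite minus_IZR. simpl. lra.
  - exists (k + 1)%Z. rewrite plus_IZR. simpl. lra. Qed.

Lemma R_shift x : Defs.Rset (x + / 2) <-> Defs.Lset x.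
Proof. split; intros [k Hk]; exists k; lra. Qed.


Lemma E_per2 p : Defs.Eset (p + 2) <-> Defs.Eset p.
Proof. split; intros [k Hk].
  - exists (k - 1)%Z. rewrite minus_IZR. simpl. lra.
  - exists (k + 1)%Z. rewrite plus_IZR. simpl. lra. Qed.
Lemma O_per2 p : Defs.Oset (p + 2) <-> Defs.Oset p.
Proof. split; intros [k Hk].
  - exists (k - 1)%Z. rewrite minus_IZR. simpl. lra.
  - exists (k + 1)%Z. rewrite plus_IZR. simpl. lra. Qed.

Lemma hbar_pos N : (0 < N)%nat -> 0 < hbar N.
Proof. intros H. unfold hbar. apply Rinv_0_lt_compat.
  pose proof PI_RGT_0. assert (0 < INR N) by (apply lt_0_INR; auto). nra. Qed.

Lemma two_pi_h N : (0 < N)%nat -> 2 * PI * hbar N = / INR N.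
Proof. intros H. unfold hbar. pose proof PI_RGT_0. assert (0 < INR N) by (apply lt_0_INR; auto).
  field. split; lra. Qed.

Lemma frac_lo N n : (n < N)%nat -> 0 <= INR n * / INR N < 1.
Proof. intros H. assert (0 < INR N) by (apply lt_0_INR; lia).
  assert (INR n < INR N) by (apply lt_INR; auto). pose proof (pos_INR n).
  split. apply Rmult_le_pos; auto. left; apply Rinv_0_lt_compat; auto.
  apply (Rmult_lt_reg_r (INR N)); auto. field_simplify; lra. Qed.

Lemma Phi_comb N m : (0 < N)%nat -> (m < N)%nat -> IsComb (/ INR N) N (Phi N m).
Proof.
  intros HN Hm. assert (HNp : 0 < INR N) by (apply lt_0_INR; auto).
  split; [apply Rinv_0_lt_compat; auto|]. split; auto. split.
  - intros x Hx. unfold Phi in Hx.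
    destruct (classic (exists k : Z, x = INR m / INR N + IZR k)) as [[k Hk]|Hn].
    + exists (Z.of_nat m + k * Z.of_nat N)%Z. rewrite plus_IZR, mult_IZR, <- !INR_IZR_INZ, Hk.
      field. lra.
    + rewrite ind_false in Hx by auto. exfalso; apply Hx; ring.
  - intros x. unfold Phi. f_equal. apply ind_iff.
    replace (INR N * / INR N) with 1 by (field; lra).
    split; intros [k Hk].
    + exists (k - 1)%Z. rewrite minus_IZR. simpl. lra.
    + exists (k + 1)%Z. rewrite plus_IZR. simpl. lra.
Qed.

Definition Mom N m := toMom (hbar N) (Phi N m).

Lemma Mom_eq N m : (0 < N)%nat -> (m < N)%nat -> Mom N m = dftF (-1) (hbar N) (/ INR N) N (Phi N m).
Proof. intros HN Hm. unfold Mom, toMom. apply dft_eq; auto.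
  pose proof (hbar_pos N HN); lra. apply Phi_comb; auto. Qed.

Lemma Mom_supp N m p : (0 < N)%nat -> (m < N)%nat -> Mom N m p <> RtoC 0 -> on_lattice (/ INR N) p.
Proof.
  intros HN Hm H. rewrite Mom_eq in H by auto. unfold dftF in H.
  assert (HNp : 0 < INR N) by (apply lt_0_INR; auto).
  replace (2 * PI * hbar N / (INR N * / INR N)) with (/ INR N) in H
    by (rewrite two_pi_h by auto; field; lra).
  destruct (classic (on_lattice (/ INR N) p)); auto.
  rewrite ind_false in H by auto. exfalso; apply H; ring.
Qed.

Lemma Mom_per N m p : (0 < N)%nat -> (m < N)%nat -> Mom N m (p + 1) = Mom N m p.
Proof.
  intros HN Hm. rewrite Mom_eq by auto.
  assert (HNp : 0 < INR N) by (apply lt_0_INR; auto).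
  replace 1 with (2 * PI * hbar N / / INR N) by (rewrite two_pi_h by auto; field; lra).
  apply dftF_shift; auto. pose proof (hbar_pos N HN); lra. apply Rinv_0_lt_compat; auto.
Qed.

Definition ME N m : comb := fun p => Cmult (Defs.ind (Defs.Eset p)) (toMom (hbar N) (Phi N m) p).
Definition MO N m : comb := fun p => Cmult (Defs.ind (Defs.Oset p)) (toMom (hbar N) (Phi N m) p).

Lemma ME_comb N m : (0 < N)%nat -> (m < N)%nat -> IsComb (/ INR N) (2 * N) (ME N m).
Proof.
  intros HN Hm. assert (HNp : 0 < INR N) by (apply lt_0_INR; auto).
  split; [apply Rinv_0_lt_compat; auto|]. split; [lia|]. split.
  - intros x Hx. apply (Mom_supp N m); auto. intros H0. apply Hx. unfold ME. fold (Mom N m). rewrite H0. ring.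
  - intros x. unfold ME. fold (Mom N m).
    replace (INR (2 * N) * / INR N) with 2 by (rewrite mult_INR; simpl; field; lra).
    rewrite (ind_iff _ _ (E_per2 x)). replace (x + 2) with ((x + 1) + 1) by ring.
    rewrite !Mom_per; auto.
Qed.

Lemma MO_comb N m : (0 < N)%nat -> (m < N)%nat -> IsComb (/ INR N) (2 * N) (MO N m).
Proof.
  intros HN Hm. assert (HNp : 0 < INR N) by (apply lt_0_INR; auto).
  split; [apply Rinv_0_lt_compat; auto|]. split; [lia|]. split.
  - intros x Hx. apply (Mom_supp N m); auto. intros H0. apply Hx. unfold MO. fold (Mom N m). rewrite H0. ring.
  - intros x. unfold MO. fold (Mom N m).
    replace (INR (2 * N) * / INR N) with 2 by (rewrite mult_INR; simpl; field; lra).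
    rewrite (ind_iff _ _ (O_per2 x)). replace (x + 2) with ((x + 1) + 1) by ring.
    rewrite !Mom_per; auto.
Qed.

Definition Ssum N m x := csum N (fun n => Cmult (Mom N m (INR n * / INR N))
                                    (cexpi (1 * x * (INR n * / INR N) / hbar N))).
Definition Qf N x := Cmult (Defs.ind (on_lattice (2 * PI * hbar N / (INR (2 * N) * / INR N)) x))
                       (RtoC (sqrt (2 * PI * hbar N) / (INR (2 * N) * / INR N))).

Lemma Ep_eq N m : (0 < N)%nat -> (m < N)%nat ->
  Ep (hbar N) (Phi N m) = fun x => Cmult (Qf N x) (Ssum N m x).
Proof.
  intros HN Hm. assert (HNp : 0 < INR N) by (apply lt_0_INR; auto).
  apply functional_extensionality; intros x.
  change (Ep (hbar N) (Phi N m) x) with (dft 1 (hbar N) (ME N m) x).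
  rewrite (dft_eq 1 (hbar N) (/ INR N) (2 * N)); auto; [|pose proof (hbar_pos N HN); lra|apply ME_comb; auto].
  unfold dftF, Qf, Ssum. f_equal.
  replace (csum (2 * N)) with (csum (N + N)) by (f_equal; lia).
  rewrite csum_add. match goal with |- Cplus _ (csum N ?F) = _ => rewrite (csum_zero N F) end.
  - rewrite Cplus_0_r. apply csum_ext. intros n Hn. f_equal. unfold ME. fold (Mom N m).
    rewrite ind_true. ring. apply E_lo, frac_lo; auto.
  - intros n Hn. unfold ME. rewrite ind_false. ring.
    apply O_hi. rewrite plus_INR. pose proof (frac_lo N n Hn).
    replace ((INR N + INR n) * / INR N) with (1 + INR n * / INR N) by (field; lra). lra.
Qed.

Lemma Op_eq N m : (0 < N)%nat -> (m < N)%nat ->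
  Op (hbar N) (Phi N m) = fun x => Cmult (Qf N x) (Cmult (cexpi (x / hbar N)) (Ssum N m x)).
Proof.
  intros HN Hm. assert (HNp : 0 < INR N) by (apply lt_0_INR; auto).
  pose proof (hbar_pos N HN).
  apply functional_extensionality; intros x.
  change (Op (hbar N) (Phi N m) x) with (dft 1 (hbar N) (MO N m) x).
  rewrite (dft_eq 1 (hbar N) (/ INR N) (2 * N)); auto; [|lra|apply MO_comb; auto].
  unfold dftF, Qf, Ssum.
  match goal with |- _ = Cmult _ (Cmult _ (csum N ?G)) =>
  match goal with |- Cmult _ (csum _ ?F) = _ =>
    assert (Hc : csum (2 * N) F = Cmult (cexpi (x / hbar N)) (csum N G)); [|rewrite Hc; ring] end end.
  replace (csum (2 * N)) with (csum (N + N)) by (f_equal; lia).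
  rewrite csum_add, (csum_zero N).
  - rewrite Cplus_0_l. rewrite Cmult_comm, <- csum_scal. apply csum_ext. intros n Hn.
    unfold MO. fold (Mom N m).
    pose proof (frac_lo N n Hn).
    rewrite ind_true.
    + rewrite plus_INR.
      replace ((INR N + INR n) * / INR N) with (INR n * / INR N + 1) by (field; lra).
      rewrite Mom_per by auto.
      replace (1 * x * (INR n * / INR N + 1) / hbar N) with (1 * x * (INR n * / INR N) / hbar N + x / hbar N) by (field; lra).
      rewrite cexpi_plus. ring.
    + apply O_hi. rewrite plus_INR.
      replace ((INR N + INR n) * / INR N) with (1 + INR n * / INR N) by (field; lra). lra.
  - intros n Hn. unfold MO. rewrite ind_false. ring.
    apply E_lo, frac_lo; auto.
Qed.

Lemma Qf_lat N : (0 < N)%nat -> 2 * PI * hbar N / (INR (2 * N) * / INR N) = / (2 * INR N).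
Proof. intros HN. assert (0 < INR N) by (apply lt_0_INR; auto).
  rewrite two_pi_h, mult_INR by auto. simpl. field. lra. Qed.

Lemma Qf_zero N x : (0 < N)%nat -> ~ on_lattice (/ (2 * INR N)) x -> Qf N x = RtoC 0.
Proof. intros HN H. unfold Qf. rewrite Qf_lat by auto. rewrite ind_false by auto. ring. Qed.

Lemma Qf_half N x k : (0 < N)%nat -> Qf N (x + IZR k * / 2) = Qf N x.
Proof. intros HN. assert (0 < INR N) by (apply lt_0_INR; auto).
  unfold Qf. rewrite Qf_lat by auto. f_equal. apply ind_iff.
  replace (IZR k * / 2) with (IZR (k * Z.of_nat N) * / (2 * INR N)).
  apply lat_shift. rewrite mult_IZR, <- INR_IZR_INZ. field. lra. Qed.

Lemma Ssum_per N m x : (0 < N)%nat -> Ssum N m (x + 1) = Ssum N m x.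
Proof. intros HN. assert (0 < INR N) by (apply lt_0_INR; auto). pose proof PI_RGT_0.
  unfold Ssum. apply csum_ext. intros n _. f_equal.
  replace (1 * (x + 1) * (INR n * / INR N) / hbar N) with
    (1 * x * (INR n * / INR N) / hbar N + 2 * IZR (Z.of_nat n) * PI).
  rewrite cexpi_plus, cexpi_2kpi. ring.
  rewrite <- INR_IZR_INZ. unfold hbar. field. split; lra. Qed.

Lemma x_over_h N l : (0 < N)%nat -> IZR l * / (2 * INR N) / hbar N = IZR l * PI.
Proof. intros HN. assert (0 < INR N) by (apply lt_0_INR; auto). pose proof PI_RGT_0.
  unfold hbar. field. split; lra. Qed.

Lemma cexpi_neg_lpi l : cexpi (- (IZR l * PI)) = cexpi (IZR l * PI).
Proof. unfold cexpi. rewrite cos_neg, sin_neg, sin_eq_0_1 by (exists l; auto).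
  apply C_ext; simpl; ring. Qed.

Definition Vf N m x := Cplus (Ssum N m x) (Cmult (cexpi ((x + - / 2) / hbar N)) (Ssum N m (x + - / 2))).
Definition Wf N m x := Cplus (Cmult (Defs.ind (Defs.Lset x)) (Vf N m x))
   (Cmult (cexpi (-1 * x / hbar N)) (Cmult (Defs.ind (Defs.Rset x)) (Vf N m x))).

Lemma F_form N m y : (0 < N)%nat -> (m < N)%nat ->
  Fop (hbar N) (Phi N m) y = Cmult (RtoC (sqrt 2)) (Cmult (Qf N (y / 2)) (Wf N m (y / 2))).
Proof.
  intros HN Hm. unfold Fop, Sop, cadd, Lop, Rop, Xop, mulind, Yop. cbv zeta.
  rewrite Ep_eq, Op_eq by auto.
  replace (- / 2) with (IZR (-1) * / 2) by (simpl; lra).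
  rewrite Qf_half by auto. unfold Wf, Vf. replace (IZR (-1) * / 2) with (- / 2) by (simpl; lra).
  ring.
Qed.

Theorem mainTheorem4 (N : nat) (hN : (0 < N)%nat) (hev : Nat.even N = true)
  (m : nat) (hm : (m < N)%nat) :
  Xop (hbar N) 1 (Fop (hbar N) (Phi N m)) = Fop (hbar N) (Phi N m) /\
  Yop 1 (Fop (hbar N) (Phi N m)) = Fop (hbar N) (Phi N m).
Proof.
  assert (HNp : 0 < INR N) by (apply lt_0_INR; auto). pose proof PI_RGT_0.
  pose proof (hbar_pos N hN) as Hh.
  apply Nat.even_spec in hev. destruct hev as [N' HN'].
  split; apply functional_extensionality; intros y.
  - unfold Xop at 1. rewrite !F_form by auto.
    destruct (classic (on_lattice (/ (2 * INR N)) (y / 2))) as [[l Hl]|Hn].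
    + replace (1 * y / hbar N) with (2 * IZR l * PI). rewrite cexpi_2kpi. ring.
      replace y with (2 * (y / 2)) by field. rewrite Hl.
      replace (1 * (2 * (IZR l * / (2 * INR N))) / hbar N) with (2 * (IZR l * / (2 * INR N) / hbar N)) by (field; lra).
      rewrite x_over_h by auto. ring.
    + rewrite Qf_zero by auto. ring.
  - unfold Yop at 1. rewrite !F_form by auto.
    replace ((y + 1) / 2) with (y / 2 + IZR 1 * / 2) by (simpl; field).
    rewrite Qf_half by auto. set (x := y / 2).
    destruct (classic (on_lattice (/ (2 * INR N)) x)) as [[l Hl]|Hn].
    2: { rewrite Qf_zero by auto. ring. }
    assert (Hxh : x / hbar N = IZR l * PI) by (rewrite Hl; apply x_over_h; auto).
    assert (HA : cexpi (-1 * x / hbar N) = cexpi (x / hbar N)).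
    { replace (-1 * x / hbar N) with (- (x / hbar N)) by (field; lra). rewrite Hxh. apply cexpi_neg_lpi. }
    assert (HAB : Cmult (cexpi (-1 * x / hbar N)) (cexpi ((x + - / 2) / hbar N)) = RtoC 1).
    { rewrite <- cexpi_plus.
      replace (-1 * x / hbar N + (x + - / 2) / hbar N) with (2 * IZR (- Z.of_nat N') * PI).
      apply cexpi_2kpi. rewrite opp_IZR, <- INR_IZR_INZ. unfold hbar. rewrite HN', mult_INR. simpl.
      field. rewrite HN', mult_INR in HNp. simpl in HNp. split; lra. }
    assert (HBA : Cmult (cexpi (-1 * (x + IZR 1 * / 2) / hbar N)) (cexpi (-1 * x / hbar N)) = RtoC 1).
    { rewrite <- cexpi_plus.
      replace (-1 * (x + IZR 1 * / 2) / hbar N + -1 * x / hbar N) with (2 * IZR (- (l + Z.of_nat N')) * PI).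
      apply cexpi_2kpi.
      replace (-1 * (x + IZR 1 * / 2) / hbar N + -1 * x / hbar N) with (- (2 * (x / hbar N)) - / 2 / hbar N) by (field; lra).
      rewrite Hxh. rewrite opp_IZR, plus_IZR, <- INR_IZR_INZ. unfold hbar. rewrite HN', mult_INR. simpl.
      field. rewrite HN', mult_INR in HNp. simpl in HNp. split; lra. }
    assert (HV : Vf N m (x + IZR 1 * / 2) = Cmult (cexpi (-1 * x / hbar N)) (Vf N m x)).
    { unfold Vf. replace (x + IZR 1 * / 2 + - / 2) with x by (simpl; field).
      replace (x + IZR 1 * / 2) with ((x + - / 2) + 1) by (simpl; field).
      rewrite Ssum_per by auto.
      replace (x + - / 2 + 1 + - / 2) with x by field.
      rewrite Cmult_plus_distr_l, Cmult_assoc, HAB, HA. ring. }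
    unfold Wf. rewrite HV.
    replace (x + IZR 1 * / 2) with (x + / 2) by (simpl; field).
    rewrite (ind_iff _ _ (L_shift x)), (ind_iff _ _ (R_shift x)).
    replace (x + / 2) with (x + IZR 1 * / 2) by (simpl; field).
    set (A := cexpi (-1 * x / hbar N)) in *.
    set (B := cexpi (-1 * (x + IZR 1 * / 2) / hbar N)) in *.
    replace (Cmult B (Cmult (Defs.ind (Defs.Lset x)) (Cmult A (Vf N m x))))
      with (Cmult (Cmult B A) (Cmult (Defs.ind (Defs.Lset x)) (Vf N m x))) by ring.
    rewrite HBA. ring.
Qed.
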